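(* Let $A$ be a cubical set. If the morphism $A\to A^{\mathbb{I}}$, $a\mapsto\lambda\_.a$ (the exponential transpose of the projection $A\times\mathbb{I}\to A$) is an isomorphism, then $A\cong\Delta(a)$ for some set $a$.
   Context: $\mathcal{C}$ is the category of cubes: objects finite sets of names, morphisms $I\to J$ functions $J\to\mathrm{dM}(I)$ with $\mathrm{dM}(I)$ the free De Morgan algebra on $I$, composition by substitution. Cubical sets are presheaves on $\mathcal{C}$; $\mathbb{I}$ is the presheaf $I\mapsto\mathrm{dM}(I)$. $\Delta:\mathrm{Set}\to\widehat{\mathcal{C}}$ is the constant presheaf functor. *)

(* Defs.v *)
From mathcomp Require Import all_boot.
Set Implicit Arguments. Unset Strict Implicit. Unset Printing Implicit Defensive.

(* Names are natural numbers; an object of C is a finite set of names,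
   represented canonically as a strictly increasing list. *)
Definition cobj := {s : seq nat | sorted ltn s}.

Definition elem (I : cobj) := {i : nat | i \in sval I}.

Inductive dm_term (V : Type) : Type :=
| dmVar of V
| dm0
| dm1
| dmMeet of dm_term V & dm_term V
| dmJoin of dm_term V & dm_term V
| dmNeg of dm_term V.
Arguments dm0 {V}. Arguments dm1 {V}.

(* The congruence generated by the axioms of De Morgan algebras
   (bounded distributive lattice + involutive De Morgan negation).
   dM(V) is dm_term V modulo dmeq. *)
Inductive dmeq {V : Type} : dm_term V -> dm_term V -> Prop :=
| dmeq_refl x : dmeq x x
| dmeq_sym x y : dmeq x y -> dmeq y x
| dmeq_trans x y z : dmeq x y -> dmeq y z -> dmeq x z
| dmeq_meet x x' y y' : dmeq x x' -> dmeq y y' -> dmeq (dmMeet x y) (dmMeet x' y')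
| dmeq_join x x' y y' : dmeq x x' -> dmeq y y' -> dmeq (dmJoin x y) (dmJoin x' y')
| dmeq_neg x x' : dmeq x x' -> dmeq (dmNeg x) (dmNeg x')
| dmeq_meetA x y z : dmeq (dmMeet x (dmMeet y z)) (dmMeet (dmMeet x y) z)
| dmeq_joinA x y z : dmeq (dmJoin x (dmJoin y z)) (dmJoin (dmJoin x y) z)
| dmeq_meetC x y : dmeq (dmMeet x y) (dmMeet y x)
| dmeq_joinC x y : dmeq (dmJoin x y) (dmJoin y x)
| dmeq_meetK x y : dmeq (dmMeet x (dmJoin x y)) x
| dmeq_joinK x y : dmeq (dmJoin x (dmMeet x y)) x
| dmeq_meet1 x : dmeq (dmMeet x dm1) x
| dmeq_join0 x : dmeq (dmJoin x dm0) x
| dmeq_meetDr x y z :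
    dmeq (dmMeet x (dmJoin y z)) (dmJoin (dmMeet x y) (dmMeet x z))
| dmeq_negK x : dmeq (dmNeg (dmNeg x)) x
| dmeq_negJ x y : dmeq (dmNeg (dmJoin x y)) (dmMeet (dmNeg x) (dmNeg y))
| dmeq_negM x y : dmeq (dmNeg (dmMeet x y)) (dmJoin (dmNeg x) (dmNeg y)).

Fixpoint dm_subst (V W : Type) (s : V -> dm_term W) (t : dm_term V) : dm_term W :=
  match t with
  | dmVar v => s v
  | dm0 => dm0
  | dm1 => dm1
  | dmMeet a b => dmMeet (dm_subst s a) (dm_subst s b)
  | dmJoin a b => dmJoin (dm_subst s a) (dm_subst s b)
  | dmNeg a => dmNeg (dm_subst s a)
  end.

(* A morphism I -> J is a function J -> dM(I) (given by representatives);
   two such are equal when they agree pointwise in dM(I). *)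
Definition hom (I J : cobj) := elem J -> dm_term (elem I).
Definition hom_eq (I J : cobj) (f g : hom I J) := forall j, dmeq (f j) (g j).
Definition hid (I : cobj) : hom I I := fun i => dmVar i.
Arguments hid I : clear implicits.
Definition hcomp (I J K : cobj) (g : hom J K) (f : hom I J) : hom I K :=
  fun k => dm_subst f (g k).

Record cset := CSet {
  cs_ob :> cobj -> Type;
  cs_res : forall I J : cobj, hom I J -> cs_ob J -> cs_ob I;
  cs_res_ext : forall I J (f g : hom I J), hom_eq f g ->
      forall x, cs_res f x = cs_res g x;
  cs_res_id : forall I x, cs_res (hid I) x = x;
  cs_res_comp : forall I J K (f : hom I J) (g : hom J K) x,
      cs_res (hcomp g f) x = cs_res f (cs_res g x)
}.
Arguments cs_res c [I J] f x.
Arguments cs_res_ext c [I J f g] _ x.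
Arguments cs_res_comp c [I J K] f g x.

Definition cs_iso (A B : cset) : Prop :=
  exists phi : forall I, A I -> B I,
    (forall I J (f : hom I J) (x : A J),
        phi I (cs_res A f x) = cs_res B f (phi J x)) /\
    (forall I, bijective (phi I)).

Definition Delta (a : Type) : cset :=
  @CSet (fun _ => a) (fun _ _ _ x => x)
        (fun _ _ _ _ _ _ => erefl) (fun _ _ => erefl)
        (fun _ _ _ _ _ _ => erefl).

(* II is the presheaf I |-> dM(I), with restriction along f given by
   substitution dm_subst f.  An element of (A^II)(I) is a natural
   transformation y(I) x II -> A, i.e. a family
   th_J : Hom(J,I) x dM(J) -> A(J), well defined on equivalence classes
   and natural in J. *)
Record exp_el (A : cset) (I : cobj) := ExpEl {
  th : forall J : cobj, hom J I -> dm_term (elem J) -> A J;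
  th_hom : forall J (f f' : hom J I) r, hom_eq f f' -> th f r = th f' r;
  th_dm : forall J (f : hom J I) r r', dmeq r r' -> th f r = th f r';
  th_nat : forall J K (g : hom K J) (f : hom J I) r,
      th (hcomp f g) (dm_subst g r) = cs_res A g (th f r)
}.

Definition const_exp (A : cset) (I : cobj) (a : A I) : exp_el A I :=
  @ExpEl A I (fun J f _ => cs_res A f a)
    (fun J f f' _ e => cs_res_ext A e a)
    (fun _ _ _ _ _ => erefl)
    (fun J K g f _ => cs_res_comp A g f a).

(* Main.v *)
Require Import Defs.
From mathcomp Require Import all_boot.
Set Implicit Arguments. Unset Strict Implicit.

Lemma subst_id V (t : dm_term V) : dm_subst (@dmVar V) t = t.
Proof. elim: t => //= [a -> b ->|a -> b ->|a ->] //. Qed.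

Lemma subst_comp U V W (h : U -> dm_term V) (k : V -> dm_term W) t :
  dm_subst k (dm_subst h t) = dm_subst (fun v => dm_subst k (h v)) t.
Proof. elim: t => //= [a -> b ->|a -> b ->|a ->] //. Qed.

Lemma subst_ext V W (h h' : V -> dm_term W) t :
  (forall v, dmeq (h v) (h' v)) -> dmeq (dm_subst h t) (dm_subst h' t).
Proof.
move=> H; elim: t => /= [v|||a Ha b Hb|a Ha b Hb|a Ha].
- exact: H.
- exact: dmeq_refl.
- exact: dmeq_refl.
- exact: dmeq_meet.
- exact: dmeq_join.
- exact: dmeq_neg.
Qed.

Section DM.
Variable V : Type.
Implicit Types x y : dm_term V.
Lemma meet0l x : dmeq (dmMeet dm0 x) dm0.
Proof.
apply: dmeq_trans (dmeq_meetK dm0 x).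
apply: dmeq_meet; first exact: dmeq_refl.
apply: dmeq_sym; apply: dmeq_trans (dmeq_joinC _ _) _; exact: dmeq_join0.
Qed.
Lemma meet0r x : dmeq (dmMeet x dm0) dm0.
Proof. apply: dmeq_trans (dmeq_meetC _ _) _; exact: meet0l. Qed.
Lemma neg1 : dmeq (dmNeg (@dm1 V)) dm0.
Proof.
apply: dmeq_trans (dmeq_sym (dmeq_join0 _)) _.
apply: dmeq_trans (dmeq_join (dmeq_refl _) (dmeq_sym (dmeq_negK dm0))) _.
apply: dmeq_trans (dmeq_sym (dmeq_negM _ _)) _.
apply: dmeq_trans (dmeq_neg (dmeq_meetC _ _)) _.
apply: dmeq_trans (dmeq_neg (dmeq_meet1 _)) _.
exact: dmeq_negK.
Qed.
Lemma neg0 : dmeq (dmNeg (@dm0 V)) dm1.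
Proof.
apply: dmeq_trans (dmeq_neg (dmeq_sym neg1)) _; exact: dmeq_negK.
Qed.
Lemma interp0 x y : dmeq (dmJoin (dmMeet x (dmNeg dm0)) (dmMeet y dm0)) x.
Proof.
apply: dmeq_trans (dmeq_join (dmeq_meet (dmeq_refl x) neg0) (meet0r y)) _.
apply: dmeq_trans (dmeq_join0 _) _; exact: dmeq_meet1.
Qed.
Lemma interp1 x y : dmeq (dmJoin (dmMeet x (dmNeg dm1)) (dmMeet y dm1)) y.
Proof.
apply: dmeq_trans (dmeq_join (dmeq_meet (dmeq_refl x) neg1) (dmeq_meet1 y)) _.
apply: dmeq_trans (dmeq_join (meet0r x) (dmeq_refl y)) _.
apply: dmeq_trans (dmeq_joinC _ _) _; exact: dmeq_join0.
Qed.
End DM.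

Section Main.
Variable A : cset.

Definition mix (J K K' : cobj) (f g : hom K J) (h : hom K' K)
  (r : dm_term (elem K')) : hom K' J :=
  fun j => dmJoin (dmMeet (dm_subst h (f j)) (dmNeg r))
                  (dmMeet (dm_subst h (g j)) r).

Definition theta (J K : cobj) (f g : hom K J) (x : A J) : exp_el A K.
refine (@ExpEl A K (fun K' h r => cs_res A (mix f g h r) x) _ _ _).
- move=> K' h h' r e; apply: cs_res_ext => j.
  apply: dmeq_join; apply: dmeq_meet; try exact: dmeq_refl; exact: subst_ext.
- move=> K' h r r' e; apply: cs_res_ext => j.
  apply: dmeq_join; apply: dmeq_meet; try exact: dmeq_refl; try exact: e.
  exact: dmeq_neg.
- move=> K1 K2 k h r; rewrite -cs_res_comp; apply: cs_res_ext => j.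
  rewrite /mix /hcomp /= !subst_comp; exact: dmeq_refl.
Defined.

Hypothesis Hb : forall I : cobj, bijective (@const_exp A I).

Lemma res_const J K (f g : hom K J) (x : A J) : cs_res A f x = cs_res A g x.
Proof.
have [inv _ Hc] := Hb K.
have E := Hc (theta f g x).
have E0 := f_equal (fun t => @th _ _ t K (hid K) dm0) E.
have E1 := f_equal (fun t => @th _ _ t K (hid K) dm1) E.
simpl in E0, E1.
have -> : cs_res A f x = cs_res A (mix f g (hid K) dm0) x.
  apply: cs_res_ext => j; apply: dmeq_sym; rewrite /mix /hid !subst_id.
  exact: interp0.
have -> : cs_res A g x = cs_res A (mix f g (hid K) dm1) x.
  apply: cs_res_ext => j; apply: dmeq_sym; rewrite /mix /hid !subst_id.
  exact: interp1.
by rewrite -E0 -E1.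
Qed.

End Main.

Definition e0 : cobj := exist _ [::] isT.

Theorem mainTheorem3 (A : cset) :
  (forall I : cobj, bijective (@const_exp A I)) ->
  exists a : Type, cs_iso A (Delta a).
Proof.
move=> Hb; exists (A e0).
pose z (I J : cobj) : hom I J := fun _ => dm0.
exists (fun I x => cs_res A (z e0 I) x); split.
- move=> I J f x /=; rewrite -cs_res_comp; exact: res_const.
- move=> I; exists (fun y : A e0 => cs_res A (z I e0) y) => x /=.
  + by rewrite -cs_res_comp (res_const Hb _ (hid I)) cs_res_id.
  + by rewrite -cs_res_comp (res_const Hb _ (hid e0)) cs_res_id.
Qed.
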